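(* Let $E,F$ be effect algebras, $(B,v)$ a unital Abelian po-group, and $h\colon(\mathrm{Gr}(E),u)\to(B,v)$ a morphism of unital po-groups, and put $\bar h=\Gamma(h)\circ\eta_E\colon E\to\Gamma(B,v)$. Then there exist isomorphisms $$\mathrm{Gr}(E)\otimes\mathrm{Gr}(F)\cong\mathrm{Gr}(E\otimes F)$$ (of unital Abelian po-groups) and $$[E,\Gamma(B,v)]_{\bar h}\cong\Gamma([\mathrm{Gr}(E),B],h)$$ (of effect algebras).
   Context: Effect algebras $(E;\oplus,',0,1)$: $\oplus$ commutative and associative (Kleene identities), $a\oplus b=1$ iff $b=a'$, $a\oplus 1$ defined iff $a=0$. $E\otimes F$ is the tensor product of effect algebras (universal for bihomomorphisms: maps preserving existing orthosums in each variable with $(1,1)\mapsto1$). Unital Abelian po-groups $(A,u)$ have an order unit $u\ge0$ (every $x\le nu$ for some $n$); their tensor product is $(A\otimes B,u\otimes v)$ with the Abelian group tensor product and positive cone generated by $a\otimes b$, $a\in A^+,b\in B^+$. For $b\in B^+$, $\Gamma(B,b)=\{x:0\le x\le b\}$ is an effect algebra with $x\oplus y=x+y$ defined iff $x+y\le b$. $(\mathrm{Gr}(E),u)$ with $\eta_E\colon E\to\Gamma(\mathrm{Gr}(E),u)$ is the universal group of $E$: every effect algebra homomorphism $E\to\Gamma(B,w)$ is $\Gamma(g)\circ\eta_E$ for a unique order-preserving group homomorphism $g$ with $g(u)=w$. $[E,\Gamma(B,v)]_{\bar h}$ is the effect algebra of maps $f\colon E\to\Gamma(B,v)$ preserving $0$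 and existing orthosums with $f\le\bar h$ pointwise (pointwise sum, top $\bar h$). $[\mathrm{Gr}(E),B]$ is the group of group homomorphisms ordered by the cone of order-preserving ones, and $\Gamma([\mathrm{Gr}(E),B],h)$ is its interval $\{g:0\le g\le h\}$ as an effect algebra. *)

(* Defs.v *)
From HB Require Import structures.
From mathcomp Require Import all_boot all_order all_algebra.
Set Implicit Arguments. Unset Strict Implicit. Unset Printing Implicit Defensive.
Import GRing.Theory.
Local Open Scope ring_scope.

(* Partial algebras (E; ⊕, 0, 1); a ⊕ b = c is the relation pa_sum a b c *)
Record PA := {
  pa_car :> Type;
  pa_sum : pa_car -> pa_car -> pa_car -> Prop;
  pa_zero : pa_car;
  pa_one : pa_car }.

Arguments pa_sum {p} _ _ _.
Arguments pa_zero {p}.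
Arguments pa_one {p}.

Record is_EA (E : PA) : Prop := {
  ea_fun : forall a b c c' : E, pa_sum a b c -> pa_sum a b c' -> c = c';
  ea_comm : forall a b c : E, pa_sum a b c -> pa_sum b a c;
  ea_assocl : forall a b c d e : E, pa_sum a b d -> pa_sum d c e ->
     exists f, pa_sum b c f /\ pa_sum a f e;
  ea_assocr : forall a b c f e : E, pa_sum b c f -> pa_sum a f e ->
     exists d, pa_sum a b d /\ pa_sum d c e;
  ea_compl : forall a : E, exists! b, pa_sum a b pa_one;
  ea_zero_one : forall a : E, (exists c, pa_sum a pa_one c) <-> a = pa_zero }.

Record EA := { ea_pa :> PA; ea_ax : is_EA ea_pa }.

Definition ea_hom (E L : PA) (f : E -> L) : Prop :=
  f pa_one = pa_one /\
  forall a b c : E, pa_sum a b c -> pa_sum (f a) (f b) (f c).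

Definition ea_bihom (E F L : PA) (beta : E -> F -> L) : Prop :=
  beta pa_one pa_one = pa_one /\
  (forall (y : F) (a b c : E), pa_sum a b c ->
      pa_sum (beta a y) (beta b y) (beta c y)) /\
  (forall (x : E) (a b c : F), pa_sum a b c ->
      pa_sum (beta x a) (beta x b) (beta x c)).

Definition ea_iso (E L : PA) : Prop :=
  exists f : E -> L, bijective f /\ f pa_one = pa_one /\
    forall a b c : E, pa_sum a b c <-> pa_sum (f a) (f b) (f c).

Definition is_ea_tensor (E F T : EA) (tau : E -> F -> T) : Prop :=
  ea_bihom tau /\
  forall (L : EA) (beta : E -> F -> L), ea_bihom beta ->
    exists! phi : T -> L, ea_hom phi /\ forall x y, beta x y = phi (tau x y).

Record POG := {
  pog_car :> zmodType;
  pog_pos : pog_car -> Prop;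
  pog_pos0 : pog_pos 0;
  pog_posD : forall x y, pog_pos x -> pog_pos y -> pog_pos (x + y);
  pog_anti : forall x, pog_pos x -> pog_pos (- x) -> x = 0 }.

Arguments pog_pos {p} _.

Definition pog_le (G : POG) (x y : G) : Prop := pog_pos (y - x).

Record UPOG := {
  upog :> POG;
  ounit : upog;
  ounit_pos : pog_pos ounit;
  ounit_ou : forall x : upog, exists n : nat, pog_le x (ounit *+ n) }.

Arguments ounit {u}.

Definition zadditive (A C : zmodType) (f : A -> C) : Prop :=
  forall x y, f (x + y) = f x + f y.

Definition biadditive (A B C : zmodType) (t : A -> B -> C) : Prop :=
  (forall b, zadditive (fun a => t a b)) /\ (forall a, zadditive (t a)).

Definition po_hom (A C : POG) (f : A -> C) : Prop :=
  zadditive f /\ forall x, pog_pos x -> pog_pos (f x).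

Definition upog_hom (A C : UPOG) (f : A -> C) : Prop :=
  po_hom f /\ f ounit = ounit.

Definition upog_iso (A C : UPOG) : Prop :=
  exists f : A -> C, zadditive f /\ bijective f /\
    (forall x, pog_pos x <-> pog_pos (f x)) /\ f ounit = ounit.

Definition is_upog_tensor (A B T : UPOG) (t : A -> B -> T) : Prop :=
  biadditive t /\
  (forall (C : zmodType) (beta : A -> B -> C), biadditive beta ->
     exists! g : T -> C, zadditive g /\ forall a b, beta a b = g (t a b)) /\
  (forall x : T, pog_pos x <->
     exists s : seq (A * B),
       (forall i : nat, (i < size s)%N ->
          pog_pos (nth (0, 0) s i).1 /\ pog_pos (nth (0, 0) s i).2) /\
       x = \sum_(p <- s) t p.1 p.2) /\
  ounit = t ounit ounit.

Section Gamma.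
Variables (B : POG) (b : B) (hb : pog_pos b).

Definition gamma_car := {x : B | pog_pos x /\ pog_pos (b - x)}.

Lemma gamma_zero_proof : pog_pos (0 : B) /\ pog_pos (b - 0).
Proof. by rewrite subr0; split; [apply: pog_pos0 | exact: hb]. Qed.

Lemma gamma_one_proof : pog_pos b /\ pog_pos (b - b).
Proof. by rewrite subrr; split; [exact: hb | apply: pog_pos0]. Qed.

Definition Gamma : PA := {|
  pa_car := gamma_car;
  pa_sum := fun x y z => sval x + sval y = sval z;
  pa_zero := exist _ 0 gamma_zero_proof;
  pa_one := exist _ b gamma_one_proof |}.
End Gamma.

Definition GammaU (G : UPOG) : PA := Gamma (ounit_pos G).

Record is_universal_group (E : EA) (G : UPOG) (eta : E -> GammaU G) : Prop := {
  ug_hom : ea_hom eta;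
  ug_univ : forall (B : POG) (w : B) (hw : pog_pos w) (phi : E -> Gamma hw),
    ea_hom phi ->
    exists! g : G -> B, po_hom g /\ g ounit = w /\
      forall a, sval (phi a) = g (sval (eta a)) }.

Lemma ea_sum000 (E : EA) : pa_sum (pa_zero : E) pa_zero pa_zero.
Proof.
case: (ea_ax E) => _ Hc _ Har Hcomp Hz1.
have s01 : pa_sum (pa_zero : E) pa_one pa_one.
  case: (Hcomp pa_one) => z [Hz _].
  have := Hc _ _ _ Hz => Hz'.
  have z0 : z = pa_zero by apply/Hz1; exists pa_one.
  by rewrite -z0.
have [d [Hd Hd1]] := Har _ _ _ _ _ s01 s01.
have d0 : d = pa_zero by apply/Hz1; exists pa_one.
by rewrite d0 in Hd.
Qed.

Lemma zadd0 (A C : zmodType) (f : A -> C) : zadditive f -> f 0 = 0.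
Proof.
by move=> Hf; apply/(addrI (f 0)); rewrite -Hf !addr0.
Qed.

Lemma zaddB (A C : zmodType) (f : A -> C) x y : zadditive f -> f (x - y) = f x - f y.
Proof.
move=> Hf; apply/eqP; rewrite eq_sym subr_eq -Hf subrK //.
Qed.

Section Maps.
Variables (E : EA) (G B : UPOG) (eta : E -> GammaU G) (Heta : ea_hom eta)
  (h : G -> B) (hh : upog_hom h).

Definition hbar (a : E) : B := h (sval (eta a)).

Lemma eta_zero : sval (eta pa_zero) = 0.
Proof.
have /= E0 := (proj2 Heta) _ _ _ (ea_sum000 E).
by apply/(addrI (sval (eta pa_zero))); rewrite E0 addr0.
Qed.

Definition mapsP (f : E -> B) : Prop :=
  (forall a, pog_pos (f a) /\ pog_pos (ounit - f a) /\ pog_pos (hbar a - f a)) /\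
  f pa_zero = 0 /\
  (forall a b c : E, pa_sum a b c -> f a + f b = f c).

Lemma maps_zero_proof : mapsP (fun _ => 0).
Proof.
case: hh => [[hadd hpos] hu].
split; last by split=> // *; rewrite addr0.
move=> a; rewrite !subr0; split; first exact: pog_pos0.
split; first exact: ounit_pos.
by apply: hpos; case: (svalP (eta a)).
Qed.

Lemma maps_one_proof : mapsP hbar.
Proof.
case: hh => [[hadd hpos] hu].
split; [move=> a|split].
- rewrite subrr; case: (svalP (eta a)) => p1 p2.
  split; first exact: hpos.
  split; last exact: pog_pos0.
  by rewrite /hbar -hu -zaddB //; apply: hpos.
- by rewrite /hbar eta_zero zadd0.
- move=> a b c Habc; rewrite /hbar -hadd.
  by have /= <- := (proj2 Heta) _ _ _ Habc.
Qed.

(* [E, Γ(B, v)]_{\bar h} *)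
Definition EAmaps : PA := {|
  pa_car := {f : E -> B | mapsP f};
  pa_sum := fun f g k => forall a, sval f a + sval g a = sval k a;
  pa_zero := exist _ (fun _ => 0) maps_zero_proof;
  pa_one := exist _ hbar maps_one_proof |}.

(* Γ([Gr(E), B], h) : group homomorphisms g with 0 <= g <= h *)
Definition intervalP (g : G -> B) : Prop :=
  zadditive g /\ (forall x, pog_pos x -> pog_pos (g x)) /\
  (forall x, pog_pos x -> pog_pos (h x - g x)).

Lemma interval_zero_proof : intervalP (fun _ => 0).
Proof.
case: hh => [[hadd hpos] hu].
split; first by move=> *; rewrite addr0.
split=> x Hx; last by rewrite subr0; apply: hpos.
exact: pog_pos0.
Qed.

Lemma interval_one_proof : intervalP h.
Proof.
case: hh => [[hadd hpos] hu].
split=> //; split=> // x _; rewrite subrr; exact: pog_pos0.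
Qed.

Definition GammaHom : PA := {|
  pa_car := {g : G -> B | intervalP g};
  pa_sum := fun f g k => forall x, sval f x + sval g x = sval k x;
  pa_zero := exist _ (fun _ => 0) interval_zero_proof;
  pa_one := exist _ h interval_one_proof |}.
End Maps.

(* Main.v *)
Require Import Defs.
From HB Require Import structures.
From mathcomp Require Import all_boot all_order all_algebra.
From Stdlib Require Import ClassicalEpsilon FunctionalExtensionality ProofIrrelevance Classical_Prop.

Module Helpers.
Set Implicit Arguments. Unset Strict Implicit. Unset Printing Implicit Defensive.
Import GRing.Theory.
Local Open Scope ring_scope.
Lemma choice_fun (A B : Type) (P : A -> B -> Prop) :
  (forall a, exists b, P a b) -> exists f : A -> B, forall a, P a (f a).
Proof.
move=> H; exists (fun a => proj1_sig (constructive_indefinite_description _ (H a))).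
by move=> a; case: (constructive_indefinite_description _ (H a)).
Qed.

Lemma sig_eq (A : Type) (P : A -> Prop) (x y : {a | P a}) : sval x = sval y -> x = y.
Proof.
case: x y => x px [y py] /= exy; subst y; by rewrite (proof_irrelevance _ px py).
Qed.

Lemma pos_sum (G : POG) (I : Type) (s : seq I) (F : I -> G) :
  (forall i, pog_pos (F i)) -> pog_pos (\sum_(i <- s) F i).
Proof.
move=> H; elim: s => [|x s IH]; rewrite ?big_nil ?big_cons; first exact: pog_pos0.
exact: pog_posD.
Qed.

Lemma zadd_sum (A C : zmodType) (f : A -> C) (I : Type) (s : seq I) (F : I -> A) :
  zadditive f -> f (\sum_(i <- s) F i) = \sum_(i <- s) f (F i).
Proof.
move=> Hf; elim: s => [|x s IH]; rewrite ?big_nil ?big_cons ?zadd0 //.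
by rewrite Hf IH.
Qed.

Lemma pos_muln (G : POG) (x : G) n : pog_pos x -> pog_pos (x *+ n).
Proof.
move=> Hx; elim: n => [|n IH]; first by rewrite mulr0n; exact: pog_pos0.
by rewrite mulrS; apply: pog_posD.
Qed.

Lemma alg1 (V : zmodType) (b x y c : V) : b - (y + c) = b - (x + y + c) + x.
Proof. by rewrite -(addrA x y c) (opprD x (y + c)) addrA addrAC subrK. Qed.
Lemma alg2 (V : zmodType) (b x y c : V) : b - (x + y) = b - (x + (y + c)) + c.
Proof. by rewrite (addrA x y c) (opprD (x + y) c) addrA subrK. Qed.

Lemma alg3 (V : zmodType) (b x : V) : b - (b - x) = x.
Proof. by rewrite opprB addrC subrK. Qed.

Lemma alg4 (V : zmodType) (x y z : V) : z - y = (x - y) + (z - x).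
Proof. by rewrite [RHS]addrC [RHS]addrA subrK. Qed.

Lemma alg5 (V : zmodType) (a b c d : V) : (a - b = c - d) <-> (a + d = c + b).
Proof.
split=> H; first by rewrite -[a](subrK b) H addrAC subrK.
by apply/eqP; rewrite subr_eq addrAC -H addrK.
Qed.

Lemma alg7 (V : zmodType) (x y z : V) : x + y + z - x = y + z.
Proof. by rewrite -(addrA x y z) (addrC x) addrK. Qed.

Lemma nth_sum_pos (A B : zmodType) (C : POG) (s : seq (A * B)) (P : A * B -> Prop)
  (F : A * B -> C) : (forall p, P p -> pog_pos (F p)) ->
  (forall i, (i < size s)%N -> P (nth (0, 0) s i)) -> pog_pos (\sum_(p <- s) F p).
Proof.
move=> HF; elim: s => [|p s IH] Hs; rewrite ?big_nil ?big_cons; first exact: pog_pos0.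
apply: pog_posD; first by apply: HF; exact: (Hs 0%N).
by apply: IH => i Hi; exact: (Hs i.+1).
Qed.

Lemma Gamma_EA (B : POG) (b : B) (hb : pog_pos b) : is_EA (Gamma hb).
Proof.
split.
- move=> x y c c' /= H1 H2; apply: sig_eq; by rewrite -H1 -H2.
- by move=> x y c /=; rewrite addrC.
- move=> x y c d e /= Hd He.
  have Hf : pog_pos (sval y + sval c) /\ pog_pos (b - (sval y + sval c)).
    split; first by apply: pog_posD; [case: (svalP y) | case: (svalP c)].
    have -> : b - (sval y + sval c) = (b - sval e) + sval x.
      by rewrite -He -Hd (alg1 _ (sval x)).
    by apply: pog_posD; [case: (svalP e) | case: (svalP x)].
  exists (exist (fun z => pog_pos z /\ pog_pos (b - z)) _ Hf : gamma_car b); split => //=; by rewrite addrA Hd.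
- move=> x y c f e /= Hf He.
  have Hd : pog_pos (sval x + sval y) /\ pog_pos (b - (sval x + sval y)).
    split; first by apply: pog_posD; [case: (svalP x) | case: (svalP y)].
    have -> : b - (sval x + sval y) = (b - sval e) + sval c.
      by rewrite -He -Hf (alg2 _ _ _ (sval c)).
    by apply: pog_posD; [case: (svalP e) | case: (svalP c)].
  exists (exist (fun z => pog_pos z /\ pog_pos (b - z)) _ Hd : gamma_car b); split => //=; by rewrite -addrA Hf.
- move=> x.
  have Hc : pog_pos (b - sval x) /\ pog_pos (b - (b - sval x)).
    by rewrite alg3; case: (svalP x) => ? ?; split.
  exists (exist (fun z => pog_pos z /\ pog_pos (b - z)) _ Hc : gamma_car b); split => /=; first by rewrite addrC subrK.
  move=> y /= Hy; apply: sig_eq => /=; by apply/eqP; rewrite subr_eq addrC Hy.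
- move=> x; split.
  + case=> c /= Hc; apply: sig_eq => /=.
    apply: pog_anti; first by case: (svalP x).
    have -> : - sval x = b - sval c by rewrite -Hc opprD addrA addrAC subrr add0r.
    by case: (svalP c).
  + move=> ->; by exists pa_one => /=; rewrite add0r.
Qed.

Definition GammaEA (B : POG) (b : B) (hb : pog_pos b) : EA :=
  {| ea_pa := Gamma hb; ea_ax := Gamma_EA hb |}.

Section UG.
Variables (E : EA) (G : UPOG) (eta : E -> GammaU G) (HE : is_universal_group eta).

Lemma eta_one : sval (eta pa_one) = ounit.
Proof. by have [-> _] := ug_hom HE. Qed.

Lemma eta_sum a b c : pa_sum a b c -> sval (eta a) + sval (eta b) = sval (eta c).
Proof. by have [_ H] := ug_hom HE; apply: H. Qed.

Lemma eta_pos a : pog_pos (sval (eta a)).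
Proof. by case: (svalP (eta a)). Qed.

Lemma ug_ext (B : POG) (f : E -> B) : (forall a, pog_pos (f a)) ->
  (forall a b c, pa_sum a b c -> f a + f b = f c) ->
  exists g : G -> B, po_hom g /\ forall a, g (sval (eta a)) = f a.
Proof.
move=> Hp Hs.
have hw : pog_pos (f pa_one) := Hp _.
have Hin : forall a, pog_pos (f a) /\ pog_pos (f pa_one - f a).
  move=> a; split=> //. case: (ea_compl (ea_ax E) a) => a' [Ha' _].
  by rewrite -(Hs _ _ _ Ha') (addrC (f a)) addrK.
pose phi (a : E) : Gamma hw := exist _ (f a) (Hin a).
have Hphi : ea_hom phi.
  split; first by apply: sig_eq.
  move=> a b c H /=; exact: Hs.
case: (ug_univ HE Hphi) => g [[Hg [_ Hga]] _].
by exists g; split=> // a; rewrite -Hga.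
Qed.

Lemma ug_gen x : pog_pos x -> exists s : seq E, x = \sum_(a <- s) sval (eta a).
Proof.
pose P' (x : G) := exists s : seq E, x = \sum_(a <- s) sval (eta a).
have P0 : P' 0 by exists [::]; rewrite big_nil.
have PD : forall x y, P' x -> P' y -> P' (x + y).
  move=> x1 y1 [s1 ->] [s2 ->]; exists (s1 ++ s2); by rewrite big_cat.
have PP : forall x, P' x -> pog_pos x.
  move=> x1 [s ->]; apply: pos_sum => a; exact: eta_pos.
have PA : forall x, P' x -> P' (- x) -> x = 0.
  move=> x1 H1 H2; apply: pog_anti; exact: PP.
pose G' : POG := @Build_POG G P' P0 PD PA.
have [g [[gadd gpos] gE]] := @ug_ext G' (fun a => sval (eta a))
   (fun a => ex_intro _ [:: a] (esym (big_seq1 _ _ _))) eta_sum.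
have Hu : forall a, proj1_sig (eta a) = (id : G -> G) (proj1_sig (eta a)) by [].
case: (ug_univ HE (ug_hom HE)) => g0 [Hg0 Huniq].
have e1 : g0 = id.
  apply: Huniq; split; first by split.
  by split.
have e2 : g0 = (g : G -> G).
  apply: Huniq; split; first by split=> // y /gpos /PP.
  split; last by move=> a; rewrite gE.
  by rewrite -eta_one gE.
move=> Hx; have := gpos _ Hx. 
have -> : g x = x by rewrite -[g]/((g : G -> G)) -e2 e1.
done.
Qed.

Lemma ug_decomp x : exists p q : G, pog_pos p /\ pog_pos q /\ x = p - q.
Proof.
case: (ounit_ou x) => n Hn.
exists (ounit *+ n), (ounit *+ n - x); split; first by apply: pos_muln; exact: ounit_pos.
by split=> //; rewrite opprB addrC subrK.
Qed.

Lemma ug_ext0 (C : zmodType) (k : G -> C) : zadditive k ->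
  (forall a, k (sval (eta a)) = 0) -> forall x, k x = 0.
Proof.
move=> Hk H0.
have Hp : forall p, pog_pos p -> k p = 0.
  move=> p /ug_gen [s ->]; rewrite zadd_sum //; apply: big1 => a _; exact: H0.
move=> x; case: (ug_decomp x) => p [q [Hp' [Hq ->]]].
by rewrite zaddB // !Hp // subr0.
Qed.

Lemma ug_eq (C : zmodType) (k1 k2 : G -> C) : zadditive k1 -> zadditive k2 ->
  (forall a, k1 (sval (eta a)) = k2 (sval (eta a))) -> forall x, k1 x = k2 x.
Proof.
move=> H1 H2 H x; apply/eqP; rewrite -subr_eq0; apply/eqP.
apply: (@ug_ext0 C (fun x => k1 x - k2 x)).
- by move=> y z; rewrite H1 H2 opprD addrACA.
- by move=> a; rewrite H subrr.
Qed.
End UG.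
Lemma part2 (E : EA) (G B : UPOG) (eta : E -> GammaU G) (HE : is_universal_group eta)
  (h : G -> B) (hh : upog_hom h) :
  ea_iso (EAmaps (ug_hom HE) hh) (GammaHom hh).
Proof.
have [[hadd hpos] hu] := hh.
have [Psi0 HPsi] : exists Psi0 : (E -> B) -> G -> B, forall f, mapsP eta h f ->
    po_hom (Psi0 f) /\ forall a, Psi0 f (sval (eta a)) = f a.
  apply: (@choice_fun _ _ (fun f g => mapsP eta h f ->
    po_hom g /\ forall a, g (sval (eta a)) = f a)) => f.
  case: (classic (mapsP eta h f)) => Hf; last by exists (fun _ => 0).
  have [Hpos [_ Hsum]] := Hf.
  have [g Hg] := @ug_ext E G eta HE B f (fun a => proj1 (Hpos a)) Hsum.
  by exists g.
have Hint : forall f, mapsP eta h f -> intervalP h (Psi0 f).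
  move=> f Hf; have [[gadd gpos] gE] := HPsi f Hf.
  split=> //; split=> // x /(ug_gen HE) [s ->].
  rewrite (zadd_sum _ _ hadd) (zadd_sum _ _ gadd) -sumrB.
  apply: pos_sum => a; rewrite gE.
  by have [Hp _] := Hf; have [_ [_ ]] := Hp a.
pose Psi (f : EAmaps (ug_hom HE) hh) : GammaHom hh :=
  exist _ (Psi0 (sval f)) (Hint _ (svalP f)).
have HPhi : forall g : GammaHom hh, mapsP eta h (fun a => sval g (sval (eta a))).
  move=> g; have [gadd [gpos ghp]] := svalP g.
  split; last split.
  - move=> a; split; first exact: gpos _ (@eta_pos _ _ eta a).
    split; last exact: ghp _ (@eta_pos _ _ eta a).
    have -> : ounit - sval g (sval (eta a)) =
      (h (sval (eta a)) - sval g (sval (eta a))) + h (ounit - sval (eta a)).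
      by rewrite zaddB // hu -alg4.
    apply: pog_posD; first exact: ghp _ (@eta_pos _ _ eta a).
    apply: hpos; by case: (svalP (eta a)).
  - by rewrite (eta_zero (ug_hom HE)) zadd0.
  - by move=> a b c Habc; rewrite -gadd (eta_sum HE Habc).
pose Phi (g : GammaHom hh) : EAmaps (ug_hom HE) hh := exist _ _ (HPhi g).
have HPsiE : forall f : EAmaps (ug_hom HE) hh, forall a,
    sval (Psi f) (sval (eta a)) = sval f a.
  move=> f a /=; exact: (proj2 (HPsi _ (svalP f))).
have HPsiA : forall f : EAmaps (ug_hom HE) hh, zadditive (sval (Psi f)).
  by move=> f; case: (svalP (Psi f)).
exists Psi; split; [|split].
- exists Phi.
  + move=> f; apply: sig_eq; apply: functional_extensionality => a /=.
    exact: (HPsiE f a).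
  + move=> g; apply: sig_eq; apply: functional_extensionality => x.
    apply: (@ug_eq E G eta HE B (sval (Psi (Phi g))) (sval g)) => //.
    by case: (svalP g).
- apply: sig_eq; apply: functional_extensionality => x.
  apply: (@ug_eq E G eta HE B (sval (Psi pa_one)) h) => //.
- move=> f1 f2 f3; split => /= H.
  + move=> x; apply: (@ug_eq E G eta HE B (fun x => sval (Psi f1) x + sval (Psi f2) x)
         (sval (Psi f3))) => //.
    * by move=> y z; rewrite !HPsiA addrACA.
    * by move=> a; rewrite !HPsiE.
  + move=> a; have := H (sval (eta a)); by rewrite !(proj2 (HPsi _ (svalP _))).
Qed.
Lemma part1
  (E F : EA)
  (GrE : UPOG) (etaE : E -> GammaU GrE) (HE : is_universal_group etaE)
  (GrF : UPOG) (etaF : F -> GammaU GrF) (HF : is_universal_group etaF)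
  (EF : EA) (tau : E -> F -> EF) (Htau : is_ea_tensor tau)
  (GrEF : UPOG) (etaEF : EF -> GammaU GrEF) (HEF : is_universal_group etaEF)
  (T : UPOG) (t : GrE -> GrF -> T) (Ht : is_upog_tensor t) :
  upog_iso T GrEF.
Proof.
have [[tau1 [tauL tauR]] tauU] := Htau.
have [[tA1 tA2] [tU [tP tu]]] := Ht.
have [G1 HG1] : exists G1 : F -> GrE -> GrEF, forall b,
    po_hom (G1 b) /\ forall a, G1 b (sval (etaE a)) = sval (etaEF (tau a b)).
  apply: (@choice_fun _ _ (fun b g => po_hom g /\
     forall a, g (sval (etaE a)) = sval (etaEF (tau a b)))) => b.
  apply: (@ug_ext E GrE etaE HE GrEF (fun a => sval (etaEF (tau a b)))).
  - by move=> a; exact: eta_pos.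
  - by move=> a1 a2 a3 H; apply: (eta_sum HEF); apply: tauL.
have G1add : forall b, zadditive (G1 b) by move=> b; case: (HG1 b) => [[]].
have G1pos : forall b x, pog_pos x -> pog_pos (G1 b x).
  by move=> b; case: (HG1 b) => [[]].
have G1sum : forall b1 b2 b3, pa_sum b1 b2 b3 -> forall x, G1 b1 x + G1 b2 x = G1 b3 x.
  move=> b1 b2 b3 Hb x.
  apply: (@ug_eq E GrE etaE HE GrEF (fun x => G1 b1 x + G1 b2 x) (G1 b3)) => //.
  - by move=> y z; rewrite !G1add addrACA.
  - by move=> a; rewrite !(proj2 (HG1 _)); apply: (eta_sum HEF); apply: tauR.
have [K HK] : exists K : GrE -> GrF -> GrEF, forall x, pog_pos x ->
    po_hom (K x) /\ forall b, K x (sval (etaF b)) = G1 b x.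
  apply: (@choice_fun _ _ (fun x k => pog_pos x -> po_hom k /\
     forall b, k (sval (etaF b)) = G1 b x)) => x.
  case: (classic (pog_pos x)) => Hx; last by exists (fun _ => 0).
  have [k Hk] := @ug_ext F GrF etaF HF GrEF (fun b => G1 b x) (fun b => G1pos b x Hx)
     (fun b1 b2 b3 H => G1sum b1 b2 b3 H x).
  by exists k.
have Kadd : forall x, pog_pos x -> zadditive (K x) by move=> x /HK [[]].
have KE : forall x, pog_pos x -> forall b, K x (sval (etaF b)) = G1 b x by move=> x /HK [].
have Kpos : forall x y, pog_pos x -> pog_pos y -> pog_pos (K x y).
  by move=> x y /HK [[]] _ H _; apply: H.
have KD : forall p q, pog_pos p -> pog_pos q -> forall y, K (p + q) y = K p y + K q y.
  move=> p q Hp Hq y.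
  have Hpq := pog_posD Hp Hq.
  apply: (@ug_eq F GrF etaF HF GrEF (K (p + q)) (fun y => K p y + K q y)) => //.
  - exact: Kadd.
  - by move=> y1 y2; rewrite !Kadd // addrACA.
  - by move=> b; rewrite !KE // G1add.
have K0 : forall y, K 0 y = 0.
  have H0 := @pog_pos0 GrE.
  apply: (@ug_ext0 F GrF etaF HF GrEF (K 0)); first exact: Kadd.
  by move=> b; rewrite KE // zadd0.
have Kwd : forall p q p' q', pog_pos p -> pog_pos q -> pog_pos p' -> pog_pos q' ->
    p - q = p' - q' -> forall y, K p y - K q y = K p' y - K q' y.
  move=> p q p' q' Hp Hq Hp' Hq' /alg5 H y; apply/alg5.
  by rewrite -!KD // H.
have [PQ HPQ] : exists PQ : GrE -> GrE * GrE, forall x,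
    pog_pos (PQ x).1 /\ pog_pos (PQ x).2 /\ x = (PQ x).1 - (PQ x).2.
  apply: (@choice_fun _ _ (fun x pq => pog_pos pq.1 /\ pog_pos pq.2 /\ x = pq.1 - pq.2)) => x.
  by have [p [q H]] := ug_decomp x; exists (p, q).
pose beta x y := K (PQ x).1 y - K (PQ x).2 y.
have betaP : forall p, pog_pos p -> forall y, beta p y = K p y.
  move=> p Hp y; have [H1 [H2 H3]] := HPQ p.
  rewrite /beta (Kwd _ _ p 0) //; first by rewrite K0 subr0.
    exact: pog_pos0.
  by rewrite subr0 -H3.
have betaA : biadditive beta.
  split.
  - move=> y x1 x2 /=.
    have [H11 [H12 H13]] := HPQ x1; have [H21 [H22 H23]] := HPQ x2.
    have [H1 [H2 H3]] := HPQ (x1 + x2).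
    rewrite /beta (Kwd _ _ ((PQ x1).1 + (PQ x2).1) ((PQ x1).2 + (PQ x2).2)) //.
    + by rewrite !KD // opprD addrACA.
    + exact: pog_posD.
    + exact: pog_posD.
    + by rewrite -H3 opprD addrACA -H13 -H23.
  - move=> x y1 y2; rewrite /beta.
    have [H1 [H2 H3]] := HPQ x.
    by rewrite !Kadd // opprD addrACA.
have betaE : forall a b, beta (sval (etaE a)) (sval (etaF b)) = sval (etaEF (tau a b)).
  by move=> a b; rewrite betaP ?KE ?(proj2 (HG1 _)) //; exact: eta_pos.
have betapos : forall p q, pog_pos p -> pog_pos q -> pog_pos (beta p q).
  by move=> p q Hp Hq; rewrite betaP //; apply: Kpos.
have [Th [[Thadd Tht] _]] := tU GrEF beta betaA.
have Thpos : forall x, pog_pos x -> pog_pos (Th x).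
  move=> x /tP [s [Hs ->]]; rewrite zadd_sum //.
  apply: (@nth_sum_pos GrE GrF GrEF s (fun p => pog_pos p.1 /\ pog_pos p.2)) => //.
  by move=> p [Hp Hq]; rewrite -Tht; apply: betapos.
have Thu : Th ounit = ounit.
  rewrite tu -Tht betaP; last exact: ounit_pos.
  rewrite -(eta_one HF) KE; last exact: ounit_pos.
  by rewrite -{1}(eta_one HE) (proj2 (HG1 _)) tau1 (eta_one HEF).
have tpos : forall p q, pog_pos p -> pog_pos q -> pog_pos (t p q).
  move=> p q Hp Hq; apply/tP; exists [:: (p, q)]; split; last by rewrite big_seq1.
  by case=> //.
pose L := GammaEA (ounit_pos T).
have Hbin : forall a b, pog_pos (t (sval (etaE a)) (sval (etaF b))) /\ pog_pos (ounit - t (sval (etaE a)) (sval (etaF b))).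
  move=> a b; split; first by apply: tpos; exact: eta_pos.
  case: (ea_compl (ea_ax E) a) => a' [Ha' _].
  case: (ea_compl (ea_ax F) b) => b' [Hb' _].
  have Ea := eta_sum HE Ha'; rewrite (eta_one HE) in Ea.
  have Eb := eta_sum HF Hb'; rewrite (eta_one HF) in Eb.
  have E1 : t (sval (etaE a) + sval (etaE a')) (sval (etaF b) + sval (etaF b')) =
    t ounit ounit by rewrite Ea Eb.
  rewrite tu -E1 tA1 tA2 alg7 Eb.
  by apply: pog_posD; apply: tpos; (exact: eta_pos || exact: ounit_pos).
pose beta' (a : E) (b : F) : L := exist _ _ (Hbin a b).
have Hbeta' : ea_bihom beta'.
  split; last split.
  - apply: sig_eq => /=; by rewrite !eta_one // tu.
  - move=> y a1 a2 a3 H /=; by rewrite -tA1 (eta_sum HE H).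
  - move=> x b1 b2 b3 H /=; by rewrite -tA2 (eta_sum HF H).
have [phi [[Hphi Hphib] _]] := tauU L beta' Hbeta'.
have [psi [[psiadd psipos] psiE]] := @ug_ext EF GrEF etaEF HEF T (fun c => sval (phi c))
   (fun c => proj1 (svalP (phi c))) (fun c1 c2 c3 H => proj2 Hphi _ _ _ H).
pose L2 := GammaEA (ounit_pos GrEF).
pose beta2 (a : E) (b : F) : L2 := etaEF (tau a b).
have Hbeta2 : ea_bihom beta2.
  split; last split.
  - by rewrite /beta2 tau1; have [-> _] := ug_hom HEF.
  - by move=> y a1 a2 a3 H; apply: (proj2 (ug_hom HEF)); apply: tauL.
  - by move=> x b1 b2 b3 H; apply: (proj2 (ug_hom HEF)); apply: tauR.
have [phi2 [_ Huniq2]] := tauU L2 beta2 Hbeta2.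
have Hchi : forall c, pog_pos (Th (sval (phi c))) /\ pog_pos (ounit - Th (sval (phi c))).
  move=> c; split; first by apply: Thpos; case: (svalP (phi c)).
  rewrite -Thu -zaddB //; apply: Thpos; by case: (svalP (phi c)).
pose chi (c : EF) : L2 := exist _ _ (Hchi c).
have e1 : phi2 = etaEF by apply: Huniq2; split=> //; exact: ug_hom HEF.
have e2 : phi2 = chi.
  apply: Huniq2; split.
  - split.
    + apply: sig_eq => /=; by rewrite (proj1 Hphi) /= Thu.
    + move=> c1 c2 c3 H /=; by rewrite -Thadd (proj2 Hphi _ _ _ H).
  - move=> x y; apply: sig_eq => /=; by rewrite -Hphib /= -Tht betaE.
have ThphiE : forall c, Th (sval (phi c)) = sval (etaEF c).
  by move=> c; rewrite -e1 e2.
have ThK : forall x, Th (psi x) = x.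
  apply: (@ug_eq EF GrEF etaEF HEF GrEF (fun x => Th (psi x)) id).
  - by move=> x y; rewrite psiadd Thadd.
  - by [].
  - by move=> c; rewrite psiE ThphiE.
have H1 : forall a y, t (sval (etaE a)) y = psi (beta (sval (etaE a)) y).
  move=> a; apply: (@ug_eq F GrF etaF HF T (t (sval (etaE a))) (fun y => psi (beta (sval (etaE a)) y))).
  - exact: tA2.
  - by move=> y z; rewrite (proj2 betaA) psiadd.
  - by move=> b; rewrite betaE psiE -Hphib.
have H2 : forall x y, t x y = psi (beta x y).
  move=> x y; apply: (@ug_eq E GrE etaE HE T (fun x => t x y) (fun x => psi (beta x y))).
  - exact: tA1.
  - by move=> x1 x2; rewrite (proj1 betaA) psiadd.
  - by move=> a; apply: H1.
have [g0 [_ Hu0]] := tU T t (conj tA1 tA2).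
have KTh : forall x, psi (Th x) = x.
  have e3 : g0 = id by apply: Hu0.
  have e4 : g0 = (fun x => psi (Th x)).
    apply: Hu0; split; first by move=> x y; rewrite Thadd psiadd.
    by move=> a b; rewrite -Tht H2.
  by move=> x; symmetry; exact: (congr1 (fun f => f x) (etrans (esym e3) e4)).
exists Th; split=> //; split; first by exists psi.
split=> // x; split; first exact: Thpos.
by move=> /psipos; rewrite KTh.
Qed.
End Helpers.

Theorem theorem5p1
  (E F : EA)
  (GrE : UPOG) (etaE : E -> GammaU GrE) (HE : is_universal_group etaE)
  (GrF : UPOG) (etaF : F -> GammaU GrF) (HF : is_universal_group etaF)
  (EF : EA) (tau : E -> F -> EF) (Htau : is_ea_tensor tau)
  (GrEF : UPOG) (etaEF : EF -> GammaU GrEF) (HEF : is_universal_group etaEF)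
  (T : UPOG) (t : GrE -> GrF -> T) (Ht : is_upog_tensor t)
  (B : UPOG) (h : GrE -> B) (hh : upog_hom h) :
  upog_iso T GrEF /\
  ea_iso (EAmaps (ug_hom HE) hh) (GammaHom hh).
Proof.
split; [exact: (Helpers.part1 HE HF Htau HEF Ht) | exact: Helpers.part2].
Qed.
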